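(* Let $M,N,p,r\ge1$. If $i$ is constant, or if the multisets $\{(a_y,b_y)\}_{y=1}^p$ and $\{(a_y,b_{y+1})\}_{y=1}^p$ coincide, then $(E_x)$ holds for all $x$. The normalized number $\beta_p^r(M,N)$ of triples $(i,a,b)$ satisfying one of these two conditions (divided by $M^{p+r}N^p$) equals $$\beta_p^r(M,N)=\delta_p(M,N)+\frac{1}{M^{r-1}}\big(1-\delta_p(M,N)\big),$$ and $\beta_p^r(M,N)=d_p^r(M,N)$ whenever $M=1$, or $N=1$, or $r=1$, or $p\le3$.
   Context: For integers $M,N,p,r\ge1$, consider triples $(i,a,b)$ with $i\in\mathbb Z_M^r$, $a\in\mathbb Z_M^p$, $b\in\mathbb Z_N^p$, with cyclic conventions $i_{r+1}=i_1$, $b_{p+1}=b_1$. For $x\in\{1,\dots,r\}$, condition $(E_x)$ says that the multisets $\{(i_x+a_y,b_y),(i_{x+1}+a_y,b_{y+1}):y=1,\dots,p\}$ and $\{(i_x+a_y,b_{y+1}),(i_{x+1}+a_y,b_y):y=1,\dots,p\}$ of elements of $\mathbb Z_M\times\mathbb Z_N$ (counted with multiplicity) coincide. Define $d_p^r(M,N)=\frac{1}{M^{p+r}N^p}\#\{(i,a,b):(E_x)\text{ holds for all }x\}$ and $\delta_p(M,N)=\frac{1}{(MN)^p}\#\{(a,b)\in\mathbb Z_M^p\times\mathbb Z_N^p:\{(a_y,b_y)\}_{y=1}^p=\{(a_y,b_{y+1})\}_{y=1}^p\text{ as multisets}\}$. A tuple is constant if all its entries are equal. *)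

(* Defs.v *)
(* Z_M is represented by 'I_M with arithmetic mod M
   (valid for every M >= 1, unlike 'Z_M). *)
From HB Require Import structures.
From mathcomp Require Import all_boot all_order all_algebra.
Set Implicit Arguments. Unset Strict Implicit. Unset Printing Implicit Defensive.
Import GRing.Theory Num.Theory.

(* i in Z_M^r, a in Z_M^p, b in Z_N^p *)
Definition triple (M N p r : nat) : finType :=
  ({ffun 'I_r -> 'I_M} * {ffun 'I_p -> 'I_M} * {ffun 'I_p -> 'I_N})%type.

(* ordS x is the cyclic successor x+1 (so i_{r+1} = i_1, b_{p+1} = b_1). *)

Definition condE (M N p r : nat) (i : {ffun 'I_r -> 'I_M})
    (a : {ffun 'I_p -> 'I_M}) (b : {ffun 'I_p -> 'I_N}) (x : 'I_r) : bool :=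
  perm_eq
    (flatten [seq [:: (((i x : nat) + a y) %% M, (b y : nat));
                      (((i (ordS x) : nat) + a y) %% M, (b (ordS y) : nat))]
             | y <- enum 'I_p])
    (flatten [seq [:: (((i x : nat) + a y) %% M, (b (ordS y) : nat));
                      (((i (ordS x) : nat) + a y) %% M, (b y : nat))]
             | y <- enum 'I_p]).

Definition allE (M N p r : nat) (t : triple M N p r) : bool :=
  let: (i, a, b) := t in [forall x, condE i a b x].

Definition condDelta (M N p : nat) (a : {ffun 'I_p -> 'I_M})
    (b : {ffun 'I_p -> 'I_N}) : bool :=
  perm_eq [seq ((a y : nat), (b y : nat)) | y <- enum 'I_p]
          [seq ((a y : nat), (b (ordS y) : nat)) | y <- enum 'I_p].

Definition constant_tuple (n M : nat) (i : {ffun 'I_n -> 'I_M}) : bool :=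
  [forall x, forall y, i x == i y].

Definition d_pr (M N p r : nat) : rat :=
  (#|[set t : triple M N p r | allE t]|%:R / (M ^ (p + r) * N ^ p)%:R)%R.

Definition delta_p (M N p : nat) : rat :=
  (#|[set ab : {ffun 'I_p -> 'I_M} * {ffun 'I_p -> 'I_N} | condDelta ab.1 ab.2]|%:R
     / ((M * N) ^ p)%:R)%R.

Definition beta_pr (M N p r : nat) : rat :=
  (#|[set t : triple M N p r |
        constant_tuple t.1.1 || condDelta t.1.2 t.2]|%:R
     / (M ^ (p + r) * N ^ p)%:R)%R.

(* Main.v *)
Require Import Defs.
From HB Require Import structures.
From mathcomp Require Import all_boot all_order all_algebra.
Import GRing.Theory Num.Theory.
From mathcomp Require Import ring.

Lemma rowP (T S: eqType) (L R : seq (T*S)) (c:S): perm_eq L R ->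
  perm_eq [seq z.1 | z <- L & z.2 == c] [seq z.1 | z <- R & z.2 == c].
Proof. by move=> H; apply: perm_map; apply: perm_filter. Qed.

Lemma two (T : eqType) (p q r s : T) : perm_eq [:: p; q] [:: r; s] -> p != r -> p = s.
Proof.
move=> H ne; have : p \in [:: r; s] by rewrite -(perm_mem H) mem_head.
by rewrite !inE (negbTE ne) => /eqP.
Qed.

Lemma two' (T : eqType) (p q r s : T) : perm_eq [:: p; q] [:: r; s] -> r != p -> p = s.
Proof. by rewrite eq_sym; apply: two. Qed.

Lemma nsym (U : eqType) (u v : U) : u != v -> (v == u) = false.
Proof. by move=> h; rewrite eq_sym (negbTE h). Qed.

Arguments nsym {U u v}.

Ltac pe := apply/permP => z /=; ring.

Lemma key3 (T S : eqType) (x0 x1 x2 t0 t1 t2 : T) (y0 y1 y2 : S):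
 t0 != x0 -> t1 != x1 -> t2 != x2 ->
 (x0 == x1) = (t0 == t1) -> (x0 == x2) = (t0 == t2) -> (x1 == x2) = (t1 == t2) ->
 perm_eq [:: (x0,y0);(t0,y1);(x1,y1);(t1,y2);(x2,y2);(t2,y0)]
         [:: (x0,y1);(t0,y0);(x1,y2);(t1,y1);(x2,y0);(t2,y2)] ->
 perm_eq [:: (x0,y0);(x1,y1);(x2,y2)] [:: (x0,y1);(x1,y2);(x2,y0)].
Proof.
move=> n0 n1 n2 e01 e02 e12 H; have R c := @rowP _ _ _ _ c H.
case: (y0 =P y1) => [E01|/eqP d01]; case: (y1 =P y2) => [E12|/eqP d12];
  case: (y0 =P y2) => [E02|/eqP d02].
- by subst.
- by subst; rewrite eqxx in d02.
- by subst; rewrite eqxx in d12.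
- subst y1. have := R y2; rewrite /= eqxx ?(negbTE d02) ?(nsym d02) //= => /two /(_ n1) /eqP.
  rewrite -e12 => /eqP E; subst x2; pe.
- by subst; rewrite eqxx in d01.
- subst y2. have := R y0; rewrite /= eqxx ?(negbTE d01) ?(nsym d01) //= => /two' /(_ n0) E; subst x2; pe.
- subst y2. have := R y1; rewrite /= eqxx ?(negbTE d01) ?(nsym d01) //= => /two /(_ n0) /eqP.
  rewrite -e01 => /eqP E; subst x1; pe.
- have := R y0; rewrite /= eqxx ?(negbTE d01) ?(negbTE d02) ?(nsym d01) ?(nsym d02) //= => /two' /(_ n0) E; subst x2.
  have := R y1; rewrite /= eqxx ?(negbTE d01) ?(negbTE d12) ?(nsym d01) ?(nsym d12) //= => /two /(_ n0) /eqP.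
  rewrite -e01 => /eqP E; subst x1; pe.
Qed.


Lemma key2 (T S : eqType) (x0 x1 t0 t1 : T) (y0 y1 : S):
 t0 != x0 -> t1 != x1 -> (x0 == x1) = (t0 == t1) ->
 perm_eq [:: (x0,y0);(t0,y1);(x1,y1);(t1,y0)]
         [:: (x0,y1);(t0,y0);(x1,y0);(t1,y1)] ->
 perm_eq [:: (x0,y0);(x1,y1)] [:: (x0,y1);(x1,y0)].
Proof.
move=> n0 n1 e01 H; have R c := @rowP _ _ _ _ c H.
case: (y0 =P y1) => [E01|/eqP d01]; first by subst.
have := R y0; rewrite /= eqxx ?(negbTE d01) ?(nsym d01) //= => /two' /(_ n0) E; subst x1; pe.
Qed.

Arguments key3 {T S x0 x1 x2 t0 t1 t2 y0 y1 y2}.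
Arguments key2 {T S x0 x1 t0 t1 y0 y1}.

Section Cases.
Variables (M N : nat) (u v : nat) (uM : u < M) (vM : v < M) (uv : u != v).

Lemma nt y : (v + y) %% M != (u + y) %% M.
Proof. by rewrite eqn_modDr !modn_small // eq_sym. Qed.

Lemma ee y z : ((u + y) %% M == (u + z) %% M) = ((v + y) %% M == (v + z) %% M).
Proof. by rewrite !eqn_modDl. Qed.

Lemma hb y : y < M -> ((u + y) %% M + (M - u)) %% M = y.
Proof.
by move=> yM; rewrite modnDml addnAC subnKC ?(ltnW uM) // modnDl modn_small.
Qed.

Definition o30 : 'I_3 := @Ordinal 3 0 isT.
Definition o31 : 'I_3 := @Ordinal 3 1 isT.
Definition o32 : 'I_3 := @Ordinal 3 2 isT.
Definition o20 : 'I_2 := @Ordinal 2 0 isT.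
Definition o21 : 'I_2 := @Ordinal 2 1 isT.

Lemma case3 (a : {ffun 'I_3 -> 'I_M}) (b : {ffun 'I_3 -> 'I_N}) :
 perm_eq (flatten [seq [:: ((u + a y) %% M, (b y : nat)); ((v + a y) %% M, (b (ordS y) : nat))] | y <- enum 'I_3])
         (flatten [seq [:: ((u + a y) %% M, (b (ordS y) : nat)); ((v + a y) %% M, (b y : nat))] | y <- enum 'I_3]) ->
 condDelta a b.
Proof.
have e3 : enum 'I_3 = [:: o30; o31; o32] by apply: (inj_map val_inj); rewrite val_enum_ord.
have s0 : ordS o30 = o31 by apply: val_inj.
have s1 : ordS o31 = o32 by apply: val_inj.
have s2 : ordS o32 = o30 by apply: val_inj.
rewrite /condDelta e3 /= s0 s1 s2.
move/(key3 (nt (a o30)) (nt (a o31)) (nt (a o32)) (ee (a o30) (a o31)) (ee (a o30) (a o32)) (ee (a o31) (a o32))).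
pose h (z : nat * nat) := ((z.1 + (M - u)) %% M, z.2).
by move/(perm_map h); rewrite /h /= !hb.
Qed.

Lemma case2 (a : {ffun 'I_2 -> 'I_M}) (b : {ffun 'I_2 -> 'I_N}) :
 perm_eq (flatten [seq [:: ((u + a y) %% M, (b y : nat)); ((v + a y) %% M, (b (ordS y) : nat))] | y <- enum 'I_2])
         (flatten [seq [:: ((u + a y) %% M, (b (ordS y) : nat)); ((v + a y) %% M, (b y : nat))] | y <- enum 'I_2]) ->
 condDelta a b.
Proof.
have e2 : enum 'I_2 = [:: o20; o21] by apply: (inj_map val_inj); rewrite val_enum_ord.
have s0 : ordS o20 = o21 by apply: val_inj.
have s1 : ordS o21 = o20 by apply: val_inj.
rewrite /condDelta e2 /= s0 s1.
move/(key2 (nt (a o20)) (nt (a o21)) (ee (a o20) (a o21))).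
pose h (z : nat * nat) := ((z.1 + (M - u)) %% M, z.2).
by move/(perm_map h); rewrite /h /= !hb.
Qed.
End Cases.

Lemma noncon r M (i : {ffun 'I_r -> 'I_M}) :
  ~~ constant_tuple i -> exists x, i x != i (ordS x).
Proof.
move=> nc; apply/existsP; apply: contraR nc => /existsPn H.
case: r i H => [|r] i H; first by apply/forallP => -[].
have K k : forall x : 'I_r.+1, val x = k -> i x = i ord0.
  elim: k => [|k IH] x xk; first by congr (i _); apply: val_inj.
  have kr : k < r.+1 by rewrite (@ltn_trans k.+1) // -xk ltn_ord.
  have -> : x = ordS (inord k).
    by apply: val_inj; rewrite /= inordK // xk modn_small // -xk ltn_ord.
  by move/negPn/eqP: (H (inord k)) => <-; apply: IH; exact: inordK.
apply/forallP => x; apply/forallP => y; by rewrite (K _ x erefl) (K _ y erefl).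
Qed.

Lemma charE M N p r (i : {ffun 'I_r -> 'I_M}) (a : {ffun 'I_p -> 'I_M})
  (b : {ffun 'I_p -> 'I_N}) : 0 < p -> [\/ M = 1, N = 1, r = 1 | p <= 3] ->
  (forall x, condE i a b x) -> constant_tuple i || condDelta a b.
Proof.
move=> p0 H E; case/orP: (orbN (constant_tuple i)) => [->//|nc]; apply/orP; right.
case: H => [M1|N1|r1|p3].
- exfalso; move/negP: nc; apply; subst M.
  apply/forallP => x; apply/forallP => y; apply/eqP.
  by case: (i x) (i y) => [[|//] ?] [[|//] ?]; apply: val_inj.
- subst N; rewrite /condDelta.
  have -> : [seq ((a y : nat), (b (ordS y) : nat)) | y <- enum 'I_p] = [seq ((a y : nat), (b y : nat)) | y <- enum 'I_p].
    apply: eq_map => y; congr pair.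
    by case: (b y) (b (ordS y)) => [[|//] ?] [[|//] ?].
  exact: perm_refl.
- exfalso; move/negP: nc; apply; subst r.
  by apply/forallP => x; apply/forallP => y; rewrite (ord1 x) (ord1 y).
have [x ne] := @noncon _ _ i nc.
move: (E x); rewrite /condE; clear E.
move: a b p0 p3; case: p => [|[|[|[|p]]]] // a b _ _.
- move=> _; rewrite /condDelta.
  have -> : [seq ((a y : nat), (b (ordS y) : nat)) | y <- enum 'I_1] = [seq ((a y : nat), (b y : nat)) | y <- enum 'I_1].
    by apply: eq_map => y; rewrite (ord1 (ordS y)) (ord1 y).
  exact: perm_refl.
- exact: (@case2 M N (i x) (i (ordS x)) (ltn_ord _) (ltn_ord _) ne).
- exact: (@case3 M N (i x) (i (ordS x)) (ltn_ord _) (ltn_ord _) ne).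
Qed.

Lemma card_sum (T : finType) (P : pred T) : #|[set t | P t]| = (\sum_t (P t : nat))%N.
Proof. rewrite -sum1_card big_mkcond /=; apply: eq_bigr => t _; rewrite inE; by case: (P t). Qed.

Lemma sum_pair (X Y : finType) (F : X * Y -> nat) :
  (\sum_t F t = \sum_x \sum_y F (x, y))%N.
Proof. by rewrite pair_big /=; apply: eq_bigr => -[x y]. Qed.

Lemma card_gen (I A B : finType) (c : pred I) (d : A -> B -> bool) :
  #|[set t : I * A * B | c t.1.1 || d t.1.2 t.2]| =
  (#|[set i | c i]| * (#|A| * #|B|) + (#|I| - #|[set i | c i]|) * #|[set ab : A * B | d ab.1 ab.2]|)%N.
Proof.
rewrite [LHS]card_sum (@sum_pair (I * A)%type B).
rewrite (@sum_pair I A).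
rewrite (bigID c) /=.
rewrite (eq_bigr (fun=> (#|A| * #|B|)%N)); last first.
  move=> i ->; rewrite -card_prod -sum1_card (@sum_pair A B).
  by apply: eq_bigr => a _; apply: eq_bigr.
rewrite [X in (_ + X)%N](eq_bigr (fun=> (\sum_(ab : A * B) (d ab.1 ab.2 : nat)))%N); last first.
  move=> i /negbTE /= ->; rewrite (@sum_pair A B).
  by apply: eq_bigr.
rewrite !sum_nat_const; congr (_ * _ + _ * _).
- by apply: eq_card => i; rewrite inE.
- rewrite -(cardC [set i | c i]); rewrite addKn; apply: eq_card => i; by rewrite !inE.
- by rewrite card_sum.
Qed.

Lemma card_const M r : (0 < r)%N -> #|[set i : {ffun 'I_r -> 'I_M} | constant_tuple i]| = M.
Proof.
case: r => // r _.
have -> : [set i : {ffun 'I_r.+1 -> 'I_M} | constant_tuple i] = [set [ffun=> m] | m : 'I_M].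
  apply/setP => i; rewrite inE; apply/idP/imsetP.
    move=> /forallP H; exists (i ord0) => //; apply/ffunP => x; rewrite ffunE.
    by apply/eqP; have /forallP := H x; apply.
  by case=> m _ ->; apply/forallP => x; apply/forallP => y; rewrite !ffunE.
rewrite card_imset ?card_ord // => m m' /ffunP /(_ ord0); by rewrite !ffunE.
Qed.

Lemma flat_swap (T : Type) (X : eqType) (s : seq T) (f g : T -> X) :
  perm_eq (flatten [seq [:: f y; g y] | y <- s]) (flatten [seq [:: g y; f y] | y <- s]).
Proof.
elim: s => //= y s /permP IH; apply/permP => P /=; rewrite IH; ring.
Qed.

Lemma flat_split (T : Type) (X : eqType) (s : seq T) (f g : T -> X) :
  perm_eq (flatten [seq [:: f y; g y] | y <- s]) (map f s ++ map g s).
Proof.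
elim: s => //= y s /permP IH; apply/permP => P /=; rewrite IH !count_cat /=; ring.
Qed.

Lemma part1 M N p r (i : {ffun 'I_r -> 'I_M}) (a : {ffun 'I_p -> 'I_M})
  (b : {ffun 'I_p -> 'I_N}) :
  constant_tuple i || condDelta a b -> forall x, condE i a b x.
Proof.
move=> /orP [/forallP C | D] x; rewrite /condE.
  have E : i (ordS x) = i x by apply/eqP; have /forallP := C (ordS x); apply.
  rewrite E; exact: flat_swap.
rewrite (permPl (flat_split _ _ _ _ _)) perm_sym (permPl (flat_split _ _ _ _ _)).
pose h (u : nat) (z : nat * nat) := ((u + z.1) %% M, z.2).
have D' : condDelta a b := D; move: D'; rewrite /condDelta perm_sym => D'.
have := perm_cat (perm_map (h (i x)) D') (perm_map (h (i (ordS x))) D).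
by rewrite -!map_comp.
Qed.

Lemma formula (M N p r D : nat) : (0 < M)%N -> (0 < N)%N -> (0 < r)%N ->
  ((M * (M^p * N^p) + (M^r - M) * D)%N%:R / (M ^ (p + r) * N ^ p)%N%:R : rat)%R =
  (D%:R / ((M * N) ^ p)%N%:R + (1 / (M ^ (r - 1))%:R) * (1 - D%:R / ((M * N) ^ p)%N%:R))%R.
Proof.
move=> M0 N0; case: r => // r _.
have le : (M <= M ^ r.+1)%N by rewrite expnS leq_pmulr // expn_gt0 M0.
rewrite subn1 /= !(natrD, natrM) natrB // !(natrM, natrX) exprD exprS exprMn.
have m0 : (M%:R : rat) != 0%R by rewrite pnatr_eq0 -lt0n.
have n0 : (N%:R : rat) != 0%R by rewrite pnatr_eq0 -lt0n.
field.
by rewrite !expf_neq0.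
Qed.

Theorem theorem3p5 (M N p r : nat) :
  (0 < M)%N -> (0 < N)%N -> (0 < p)%N -> (0 < r)%N ->
  [/\ (forall (i : {ffun 'I_r -> 'I_M}) (a : {ffun 'I_p -> 'I_M})
              (b : {ffun 'I_p -> 'I_N}),
         constant_tuple i || condDelta a b -> forall x : 'I_r, condE i a b x),
      beta_pr M N p r =
        (delta_p M N p + (1 / (M ^ (r - 1))%:R) * (1 - delta_p M N p))%R
    & [\/ M = 1%N, N = 1%N, r = 1%N | (p <= 3)%N] ->
        beta_pr M N p r = d_pr M N p r].
Proof.
move=> M0 N0 p0 r0; split.
- by move=> i a b; apply: part1.
- rewrite /beta_pr /delta_p card_gen card_const // !card_ffun !card_ord.
  exact: formula.
- move=> H; rewrite /beta_pr /d_pr.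
  have -> : [set t : triple M N p r | constant_tuple t.1.1 || condDelta t.1.2 t.2]
          = [set t | allE t].
    apply/setP => -[[i a] b]; rewrite !inE /=; apply/idP/idP.
      by move=> h; apply/forallP; apply: part1.
    by move=> /forallP h; apply: charE.
  by [].
Qed.
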